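(* For all integers $N,\ell\ge1$ and $k$ with $\ell+1\le k\le N$, the fractional chromatic number of $\mathcal U_{N,\ell,k}$ is at most $4\ell$.
   Context: $[N]=\{1,\dots,N\}$, $S_N$ is the set of permutations of $[N]$. For $\pi,\sigma\in S_N$, $\delta(\pi,\sigma)=\max_{i\in[N]}|\pi^{-1}(i)-\sigma^{-1}(i)|$. For $1\le k\le N$, $S_{N,k}$ is the set of injective maps $[k]\to[N]$; a permutation $\pi'\in S_N$ extends $\pi\in S_{N,k}$ if $\pi'(i)=\pi(i)$ for all $i\in[k]$. For $\pi,\sigma\in S_{N,k}$, $\delta(\pi,\sigma)=\min\{\delta(\pi',\sigma'):\pi',\sigma'\in S_N$ extending $\pi,\sigma$ respectively$\}$. The $k$-restricted uncertainty graph $\mathcal U_{N,\ell,k}$ has vertex set $S_{N,k}$, with $\pi\sim\sigma$ iff $\pi(1)\ne\sigma(1)$ and $\delta(\pi,\sigma)\le\ell$. The fractional chromatic number of $G$ is the least real $w$ such that there exist independent sets $I_1,\dots,I_t$ with nonnegative weights $w_1,\dots,w_t$, $\sum_j w_j=w$, and $\sum_{j:u\in I_j}w_j\ge1$ for every vertex $u$. *)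

(* Defs.v *)
(* Indices are 0-based: [N] is represented by 'I_N, [k] by 'I_k. *)
From HB Require Import structures.
From mathcomp Require Import all_boot all_order all_algebra all_fingroup.
Set Implicit Arguments. Unset Strict Implicit. Unset Printing Implicit Defensive.
Import Order.TTheory GRing.Theory Num.Theory.

Definition absdiff (a b : nat) : nat := (a - b) + (b - a).

Definition delta_perm (N : nat) (p q : {perm 'I_N}) : nat :=
  \max_(i : 'I_N) absdiff ((p^-1)%g i : nat) ((q^-1)%g i : nat).

Definition partperm (N k : nat) := {f : {ffun 'I_k -> 'I_N} | injectiveb f}.

Definition extends (N k : nat) (p : {perm 'I_N}) (f : {ffun 'I_k -> 'I_N}) : bool :=
  [forall i : 'I_k, forall j : 'I_N, (nat_of_ord i == nat_of_ord j) ==> (p j == f i)].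

(* delta for partial permutations: min over all pairs of extensions.
   (N is used as the neutral "infinity" of the min; it exceeds every
   delta_perm value, and extensions always exist when k <= N.) *)
Definition delta_part (N k : nat) (f g : partperm N k) : nat :=
  \big[minn/N]_(p : {perm 'I_N} | extends p (val f))
    \big[minn/N]_(q : {perm 'I_N} | extends q (val g)) delta_perm p q.

(* adjacency of the k-restricted uncertainty graph U_{N,l,k}:
   pi(1) <> sigma(1) (index 0 here) and delta(pi,sigma) <= l *)
Definition U_adj (N l k : nat) (f g : partperm N k) : bool :=
  [exists i : 'I_k, (nat_of_ord i == 0%N) && (val f i != val g i)]
  && (delta_part f g <= l)%N.

Definition independent (V : finType) (adj : rel V) (I : {set V}) : bool :=
  [forall u in I, forall v in I, ~~ adj u v].

Local Open Scope ring_scope.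

Definition frac_col_feasible (R : realFieldType) (V : finType) (adj : rel V) (w : R) : Prop :=
  exists (t : nat) (I : 'I_t -> {set V}) (wt : 'I_t -> R),
    [/\ forall j, independent adj (I j),
        forall j, 0 <= wt j,
        \sum_(j < t) wt j = w
      & forall u : V, 1 <= \sum_(j < t | u \in I j) wt j].

Definition is_frac_chromatic_number (R : realFieldType) (V : finType) (adj : rel V) (w : R) : Prop :=
  frac_col_feasible adj w /\ forall w', frac_col_feasible adj w' -> w <= w'.

(* Main.v *)
Require Import Defs.
From HB Require Import structures.
From mathcomp Require Import all_boot all_order all_algebra all_fingroup.
From mathcomp Require Import zify.
Import Order.TTheory GRing.Theory Num.Theory.

Lemma bigmin_ex (I : finType) (P : pred I) (F : I -> nat) (N l : nat) :
  (l < N)%N -> (\big[minn/N]_(i | P i) F i <= l)%N -> exists i, P i && (F i <= l)%N.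
Proof.
move=> lN H.
case: (pickP [pred i | P i && (F i <= l)%N]) => [i Hi|H0]; first by exists i.
exfalso.
have : (l < \big[minn/N]_(i | P i) F i)%N.
  apply: (big_ind (fun x => l < x)%N) => //.
    by move=> a b ha hb; rewrite leq_min ha hb.
  move=> i Pi; have := H0 i; rewrite /= Pi /= => /negbT; by rewrite -ltnNge.
by rewrite ltnNge H.
Qed.

Lemma from_delta (N k l : nat) (Hk : (k <= N)%N) (p q : {perm 'I_N})
  (F G : {ffun 'I_k -> 'I_N}) (i0 : 'I_k) :
  nat_of_ord i0 = 0%N -> (l < k)%N ->
  (forall x, absdiff ((p^-1)%g x) ((q^-1)%g x) <= l)%N ->
  extends p F -> extends q G -> exists a : 'I_k, (a <= l)%N && (F a == G i0).
Proof.
move=> i00 lk Hd Hp Hq.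
have Hq0 : q (widen_ord Hk i0) = G i0.
  apply/eqP; move/forallP: Hq => /(_ i0) /forallP /(_ (widen_ord Hk i0)) /implyP; apply.
  by [].
have := Hd (G i0). rewrite -Hq0 permK /= i00 /absdiff subn0 sub0n addn0 => Hy.
set y := (p^-1)%g (q (widen_ord Hk i0)) in Hy.
have yk : (y < k)%N by apply: leq_ltn_trans lk.
exists (Ordinal yk); rewrite Hy /=.
move/forallP: Hp => /(_ (Ordinal yk)) /forallP /(_ y) /implyP /(_ (eqxx (y : nat))) /eqP <-.
by rewrite /y permKV Hq0.
Qed.

Lemma delta_ex (N k l : nat) (f g : partperm N k) (i0 : 'I_k) :
  (k <= N)%N -> nat_of_ord i0 = 0%N -> (l < k)%N -> (delta_part f g <= l)%N ->
  (exists a : 'I_k, (a <= l)%N && (val f a == val g i0)) /\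
  (exists b : 'I_k, (b <= l)%N && (val g b == val f i0)).
Proof.
move=> kN i00 lk Hd.
have lN : (l < N)%N by apply: leq_trans kN.
have [p /andP [Hp Hpq]] := @bigmin_ex _ _ _ _ _ lN Hd.
have [q /andP [Hq Hdd]] := @bigmin_ex _ _ _ _ _ lN Hpq.
have Hx : forall x, (absdiff ((p^-1)%g x) ((q^-1)%g x) <= l)%N.
  move=> x; apply: leq_trans Hdd.
  exact: (leq_bigmax (F := fun i => absdiff ((p^-1)%g i : nat) ((q^-1)%g i : nat)) x).
split.
  exact: (@from_delta _ _ _ kN _ _ _ _ _ i00 lk Hx Hp Hq).
apply: (@from_delta _ _ _ kN _ _ _ _ _ i00 lk _ Hq Hp).
by move=> x; rewrite /absdiff addnC; apply: Hx.
Qed.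

Definition good (N l : nat) (x : 'I_l.+1 -> 'I_N) : {set {perm 'I_N}} :=
  [set s : {perm 'I_N} | [forall m : 'I_l.+1, (0 < m)%N ==> (s (x ord0) < s (x m))%N]].

Arguments good {N l}.

Lemma count_good (N l : nat) (x : 'I_l.+1 -> 'I_N) : injective x ->
  (#|{perm 'I_N}| <= l.+1 * #|good x|)%N.
Proof.
move=> Hx.
pose t (m : 'I_l.+1) := tperm (x ord0) (x m).
pose S (m : 'I_l.+1) := [set (t m * s)%g | s in good x].
have cover : forall s : {perm 'I_N}, exists m, s \in S m.
  move=> s.
  case: (@arg_minnP _ ord0 xpredT (fun i => nat_of_ord (s (x i))) isT) => m _ Hm.
  exists m; apply/imsetP; exists (t m * s)%g; last first.
    by rewrite mulgA tperm2 mul1g.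
  rewrite inE; apply/forallP => j; apply/implyP => j0.
  rewrite !permM /t tpermL.
  have Hinj : forall a b : 'I_l.+1, a != b -> (s (x a) : nat) != s (x b).
    by move=> a b ab; rewrite (inj_eq val_inj) (inj_eq (@perm_inj _ s)) (inj_eq Hx).
  have j0' : j != ord0 by apply/eqP => E; rewrite E in j0.
  case: (eqVneq j m) => [E|jm].
    rewrite E tpermR ltn_neqAle Hm // andbT; apply: Hinj.
    by rewrite -E.
  rewrite tpermD; last by rewrite (inj_eq Hx) eq_sym.
    by rewrite ltn_neqAle Hm // andbT; apply: Hinj; rewrite eq_sym.
  by rewrite (inj_eq Hx) eq_sym.
have cardS : forall m, #|S m| = #|good x|.
  by move=> m; rewrite card_imset //; apply: mulgI.
apply: (@leq_trans (\sum_(s : {perm 'I_N}) \sum_(m < l.+1) (s \in S m : nat))).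
  rewrite -sum1_card; apply: leq_sum => s _.
  have [m Hm] := cover s.
  by rewrite (bigD1 m) //= Hm.
rewrite exchange_big /=.
apply: (@leq_trans (\sum_(m < l.+1) #|good x|)); last first.
  by rewrite sum_nat_const card_ord.
apply: leq_sum => m _.
rewrite -(cardS m) -sum1_card.
by rewrite [X in (_ <= X)%N]big_mkcond; apply: leq_sum => s _; case: (s \in S m).
Qed.

Local Open Scope ring_scope.

Lemma sum_enum (R : realFieldType) (T : finType) (P : pred T) (c : R) :
  \sum_(j < #|T| | P (enum_val j)) c = \sum_(s | P s) c.
Proof. by rewrite (big_enum_val_cond (A := T) P (fun _ => c)). Qed.

Theorem mainTheorem4 (R : realFieldType) (N l k : nat) :
  (1 <= N)%N -> (1 <= l)%N -> (l.+1 <= k)%N -> (k <= N)%N ->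
  forall w : R, is_frac_chromatic_number (@U_adj N l k) w -> w <= (4 * l)%:R.
Proof.
move=> N1 l1 lk kN w [_ Hmin].
pose xf (f : partperm N k) (m : 'I_l.+1) := val f (widen_ord lk m).
pose cls (s : {perm 'I_N}) := [set f : partperm N k | s \in good (xf f)].
pose T := #|{perm 'I_N}|.
have T0 : (0 < T)%N by apply/card_gt0P; exists 1%g.
pose c : R := (l.+1)%:R / T%:R.
have feas : frac_col_feasible (@U_adj N l k) ((l.+1)%:R : R).
  exists T, (fun j => cls (enum_val j)), (fun _ => c); split.
  - move=> j; set s := enum_val j.
    apply/forallP => f; apply/implyP => Hf; apply/forallP => g; apply/implyP => Hg.
    apply/negP => /andP [/existsP [i /andP [/eqP i0 Hfg]] Hd].
    have [[a /andP [al /eqP Ha]] [b /andP [bl /eqP Hb]]] := @delta_ex N k l f g i kN i0 lk Hd.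
    move: Hf Hg; rewrite !inE => /forallP Hf /forallP Hg.
    have Ei : widen_ord lk ord0 = i by apply: val_inj.
    have ma : (a < l.+1)%N by [].
    have mb : (b < l.+1)%N by [].
    have Ea : widen_ord lk (Ordinal ma) = a by apply: val_inj.
    have Eb : widen_ord lk (Ordinal mb) = b by apply: val_inj.
    have a0 : (0 < Ordinal ma)%N.
      rewrite lt0n /=; apply/eqP => a0; move: Hfg; rewrite -Ha.
      have -> : a = i by apply: ord_inj; rewrite a0 i0.
      by rewrite eqxx.
    have b0 : (0 < Ordinal mb)%N.
      rewrite lt0n /=; apply/eqP => b0; move: Hfg; rewrite -Hb.
      have -> : b = i by apply: ord_inj; rewrite b0 i0.
      by rewrite eqxx.
    have := implyP (Hf (Ordinal ma)) a0; rewrite /xf Ea Ei Ha.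
    have := implyP (Hg (Ordinal mb)) b0; rewrite /xf Eb Ei Hb.
    move=> H1 H2; have := ltn_trans H1 H2; by rewrite ltnn.
  - by move=> j; rewrite divr_ge0.
  - by rewrite sumr_const card_ord /c -[_ *+ T]mulr_natr divfK // pnatr_eq0 -lt0n.
  - move=> u.
    rewrite /T (@sum_enum R _ (fun s => u \in cls s)) (eq_bigl (fun s => s \in good (xf u))); last first.
      by move=> s; rewrite inE.
    rewrite sumr_const /c -[_ *+ #|_|]mulr_natr mulrAC ler_pdivlMr ?ltr0n // mul1r -natrM ler_nat mulnC.
    rewrite /T [(_ * _)%N]mulnC; apply: count_good.
    apply: inj_comp; last by move=> a b /(congr1 val) /= /val_inj.
    exact/injectiveP/(valP u).
apply: le_trans (Hmin _ feas) _.
rewrite ler_nat.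
lia.
Qed.
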